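(* Let $f\in\mathbb{Z}_2[x]$, $n\ge2$, and let $\sigma$ be a weakly splitting cycle of $f_n$. Then one of the two lifts of $\sigma$ is again weakly splitting, and the other lift weakly grows and its (unique) lift strongly splits.
   Context: $f_n$ is the induced map on $\mathbb{Z}/2^n\mathbb{Z}$, $f_n(x\bmod 2^n)=f(x)\bmod 2^n$. A $k$-cycle of $f_n$ is a tuple $\sigma=(x_1,\dots,x_k)$ of distinct elements with $f_n(x_i)=x_{i+1}$, $f_n(x_k)=x_1$; its lifts are the cycles of $f_{n+1}$ in $\{y\in\mathbb{Z}/2^{n+1}\mathbb{Z}:y\bmod 2^n\in\sigma\}$. For a $k$-cycle at level $n$ and a representative $x\in\mathbb{Z}_2$ of one of its points, $a_n=(f^k)'(x)$, $b_n=(f^k(x)-x)/2^n$. A cycle strongly grows if $a_n\equiv1\pmod4$, $b_n$ odd; weakly grows if $a_n\equiv3\pmod4$, $b_n$ odd; strongly splits if $a_n\equiv1\pmod4$, $b_n$ even; weakly splits if $a_n\equiv3\pmod4$, $b_n$ even (independent of the representative). *)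

(* Defs.v *)
(* 2-adic integers modelled as coherent sequences of integer
   approximations (inverse limit of Z/2^m Z). *)
From mathcomp Require Import all_boot all_order all_algebra.
Set Implicit Arguments. Unset Strict Implicit. Unset Printing Implicit Defensive.
Import Order.TTheory GRing.Theory Num.Theory.
Local Open Scope ring_scope.

Definition pow2 (m : nat) : int := 2%:Z ^+ m.

(** A 2-adic integer: a sequence s of integers with s (m+1) = s m (mod 2^m);
    s m represents the class of the 2-adic integer modulo 2^m. *)
Record Z2 := MkZ2 { z2seq :> nat -> int;
                    z2coh : forall m : nat, (z2seq m.+1 = z2seq m %[mod pow2 m])%Z }.

(** A polynomial in Z_2[x], given by its list of coefficients (constant first). *)
Definition Z2poly := seq Z2.

Definition approx (f : Z2poly) (m : nat) : {poly int} :=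
  Poly [seq z2seq c m | c <- f].

Definition z2_cong (z : nat -> int) (r : int) (m : nat) : Prop :=
  (z m = r %[mod pow2 m])%Z.

Definition fn (f : Z2poly) (n : nat) (x : int) : int :=
  ((approx f n).[x] %% pow2 n)%Z.

Definition is_cycle (f : Z2poly) (n : nat) (s : seq int) : Prop :=
  [/\ (0 < size s)%N, uniq s, all (fun x => (0 <= x) && (x < pow2 n)) s &
      forall i, (i < size s)%N ->
        fn f n (nth 0 s i) = nth 0 s (i.+1 %% size s)%N].

Definition is_lift (f : Z2poly) (n : nat) (s tau : seq int) : Prop :=
  is_cycle f n.+1 tau /\ all (fun y => (y %% pow2 n)%Z \in s) tau.

Definition iter_approx (f : Z2poly) (k m : nat) : {poly int} :=
  iter k (fun p => approx f m \Po p) 'X.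

Definition a_coef (f : Z2poly) (k : nat) (x : Z2) : nat -> int :=
  fun m => ((iter_approx f k m)^`()).[x m].

(** b_n = (f^k(x) - x) / 2^n, as coherent approximations (level m uses
    level m+n of f^k(x) - x, which is divisible by 2^n). *)
Definition b_coef (f : Z2poly) (n k : nat) (x : Z2) : nat -> int :=
  fun m => (((iter_approx f k (m + n)).[x (m + n)] - x (m + n)) %/ pow2 n)%Z.

Definition cyc_prop (f : Z2poly) (n : nat) (s : seq int)
    (P : (nat -> int) -> (nat -> int) -> Prop) : Prop :=
  forall x : Z2, (x n %% pow2 n)%Z \in s ->
    P (a_coef f (size s) x) (b_coef f n (size s) x).

Definition strongly_grows f n s :=
  cyc_prop f n s (fun a b => z2_cong a 1 2 /\ z2_cong b 1 1).
Definition weakly_grows f n s :=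
  cyc_prop f n s (fun a b => z2_cong a 3 2 /\ z2_cong b 1 1).
Definition strongly_splits f n s :=
  cyc_prop f n s (fun a b => z2_cong a 1 2 /\ z2_cong b 0 1).
Definition weakly_splits f n s :=
  cyc_prop f n s (fun a b => z2_cong a 3 2 /\ z2_cong b 0 1).

(* Main.v *)
Require Import Defs.
From mathcomp Require Import all_boot all_order all_algebra.
From mathcomp Require Import zify ring.
Set Implicit Arguments. Unset Strict Implicit. Unset Printing Implicit Defensive.
Import Order.TTheory GRing.Theory Num.Theory.
Local Open Scope ring_scope.



Lemma taylor2 (p : {poly int}) (x h : int) :
  exists c, p.[x + h] = p.[x] + h * p^`().[x] + h ^+ 2 * c.
Proof.
elim/poly_ind: p => [|p a [c IH]].
  by exists 0; rewrite deriv0 !horner0; ring.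
exists (p^`().[x] + c * (x + h)).
rewrite derivMXaddC !hornerE IH /=.
ring.
Qed.

Lemma taylor1 (p : {poly int}) (x h : int) :
  exists c, p.[x + h] = p.[x] + h * c.
Proof.
have [c ->] := taylor2 p x h.
by exists (p^`().[x] + h * c); ring.
Qed.

Definition pc (d : int) (p q : {poly int}) := exists r : {poly int}, p = q + d%:P * r.

Lemma pc_refl d p : pc d p p.
Proof. by exists 0; rewrite mulr0 addr0. Qed.

Lemma pc_trans d p q s : pc d p q -> pc d q s -> pc d p s.
Proof. by move=> [r ->] [t ->]; exists (r + t); ring. Qed.

Lemma comp_shift (d : int) (q s : {poly int}) (p : {poly int}) :
  exists t, p \Po (q + d%:P * s) = p \Po q + d%:P * t.
Proof.
elim/poly_ind: p => [|p a [t IH]].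
  by exists 0; rewrite !comp_poly0 mulr0 addr0.
exists (t * (q + d%:P * s) + (p \Po q) * s).
rewrite !comp_polyD !comp_polyM !comp_polyX !comp_polyC IH.
ring.
Qed.

Lemma pc_comp d p p' q q' : pc d p p' -> pc d q q' -> pc d (p \Po q) (p' \Po q').
Proof.
move=> [r ->] [s ->].
have [t Ht] := comp_shift d q' s p'.
exists (r \Po (q' + d%:P * s) + t).
rewrite comp_polyD comp_polyM comp_polyC Ht; ring.
Qed.

Lemma pc_deriv d p q : pc d p q -> pc d p^`() q^`().
Proof.
move=> [r ->]; exists r^`().
by rewrite derivD derivM derivC mul0r add0r.
Qed.

Lemma pc_eval d p q x y : pc d p q -> (d %| x - y)%Z -> (d %| p.[x] - q.[y])%Z.
Proof.
move=> [r ->] /dvdzP [u Hu].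
have Hx : x = y + u * d by rewrite -Hu; ring.
have [c Hc] := taylor1 q y (u * d).
rewrite hornerD hornerM hornerC Hx Hc.
apply/dvdzP; exists (u * c + r.[y + u * d]); ring.
Qed.



Lemma pow2S m : pow2 m.+1 = 2 * pow2 m.
Proof. by rewrite /pow2 exprS. Qed.

Lemma pow2_gt0 m : 0 < pow2 m.
Proof. by rewrite /pow2 exprn_gt0. Qed.

Lemma pow2_neq0 m : pow2 m != 0.
Proof. by rewrite gt_eqF // pow2_gt0. Qed.

Lemma pow2_dvd m m' : (m <= m')%N -> (pow2 m %| pow2 m')%Z.
Proof. by move=> h; apply: dvdz_exp2l. Qed.

Lemma coh_dvd (x : Z2) m m' : (m <= m')%N -> (pow2 m %| x m' - x m)%Z.
Proof.
elim: m' => [|m' IH]; first by rewrite leqn0 => /eqP ->; rewrite subrr dvdz0.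
rewrite leq_eqVlt => /orP [/eqP <-|]; first by rewrite subrr dvdz0.
rewrite ltnS => hm.
have h1 := z2coh x m'. move/eqP: h1; rewrite eqz_mod_dvd => h1.
have -> : x m'.+1 - x m = (x m'.+1 - x m') + (x m' - x m) by ring.
apply: rpredD; last exact: IH.
exact: dvdz_trans (pow2_dvd hm) h1.
Qed.

Lemma approx_pc (f : Z2poly) m m' : (m <= m')%N -> pc (pow2 m) (approx f m) (approx f m').
Proof.
move=> hm; rewrite /approx; elim: f => [|c f IH] /=; first exact: pc_refl.
rewrite !cons_poly_def.
case: IH => r Hr.
have /dvdzP [u Hu] := coh_dvd c hm.
exists (r * 'X - u%:P).
rewrite Hr.
have -> : c m = c m' - u * pow2 m by rewrite -Hu; ring.
rewrite polyCB polyCM. ring.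
Qed.



Lemma modE d a b : (d %| a - b)%Z -> (a %% d)%Z = (b %% d)%Z.
Proof. by move=> h; apply/eqP; rewrite eqz_mod_dvd. Qed.

Lemma cong_iff d a b r : (d %| a - b)%Z -> ((a %% d)%Z = (r %% d)%Z <-> (d %| b - r)%Z).
Proof.
move=> h; split.
  move/eqP; rewrite eqz_mod_dvd => h2.
  have -> : b - r = - (a - b) + (a - r) by ring.
  by rewrite rpredD // rpredN.
move=> h2; apply/eqP; rewrite eqz_mod_dvd.
have -> : a - r = (a - b) + (b - r) by ring.
by rewrite rpredD.
Qed.

Lemma iter_pc f k m N : (m <= N)%N -> pc (pow2 m) (iter_approx f k m) (iter_approx f k N).
Proof.
move=> hm; elim: k => [|k IH] /=; first exact: pc_refl.
exact: pc_comp (approx_pc f hm) IH.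
Qed.

Lemma Q_iter f k N q : iter k (fun p => approx f N \Po p) q = iter_approx f k N \Po q.
Proof.
elim: k => [|k IH] /=; first by rewrite comp_polyX.
by rewrite IH comp_polyA.
Qed.

Lemma Q_add f i j N : iter_approx f (i + j) N = iter_approx f i N \Po iter_approx f j N.
Proof. by rewrite /iter_approx iterD Q_iter. Qed.

Lemma Q1 f N : iter_approx f 1 N = approx f N.
Proof. by rewrite /iter_approx /= comp_polyXr. Qed.

Lemma mod_dvd d y : (d %| (y %% d)%Z - y)%Z.
Proof. by rewrite -eqz_mod_dvd; apply/eqP; rewrite modz_mod. Qed.

Lemma fn_iter f m N i y : (m <= N)%N ->
  iter i (fn f m) (y %% pow2 m)%Z = ((iter_approx f i N).[y] %% pow2 m)%Z.
Proof.
move=> hm; elim: i => [|i IH] /=; first by rewrite hornerX.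
rewrite IH /fn horner_comp; apply: modE.
apply: pc_eval; first exact: approx_pc.
exact: mod_dvd.
Qed.

Lemma fn_mod f m N y : (m <= N)%N -> fn f m y = ((approx f N).[y] %% pow2 m)%Z.
Proof.
move=> hm; rewrite /fn; apply: modE; apply: pc_eval; first exact: approx_pc.
by rewrite subrr dvdz0.
Qed.

Definition Ak f k N y := ((iter_approx f k N)^`()).[y].

Lemma T1 f k N (x : Z2) r : (2 <= N)%N ->
  z2_cong (a_coef f k x) r 2 <-> (pow2 2 %| Ak f k N (x N) - r)%Z.
Proof.
move=> hN; rewrite /z2_cong /a_coef; apply: cong_iff.
apply: pc_eval; first exact/pc_deriv/iter_pc.
rewrite -opprB rpredN; exact: coh_dvd.
Qed.

Lemma pow2_1 : pow2 1 = 2. Proof. by []. Qed.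

Lemma par2 (q : int) : ((q %% 2)%Z = (0 %% 2)%Z <-> (2 %| q)%Z) /\ ((q %% 2)%Z = (1 %% 2)%Z <-> ~~ (2 %| q)%Z).
Proof.
have h0 : (0 %% 2)%Z = 0 :> int by [].
have h1 : (1 %% 2)%Z = 1 :> int by [].
rewrite h0 h1.
have := modz_ge0 q (isT : (2:int) != 0). have := ltz_pmod q (isT : (0:int) < 2).
case: (@dvdz_mod0P 2 q) => H; split; split => //; try lia.
Qed.

Lemma T2 f k N n' (x : Z2) : (n'.+1 <= N)%N ->
  let D := (iter_approx f k N).[x N] - x N in
  (pow2 n' %| D)%Z ->
  (z2_cong (b_coef f n' k x) 0 1 <-> (pow2 n'.+1 %| D)%Z) /\
  (z2_cong (b_coef f n' k x) 1 1 <-> ~~ (pow2 n'.+1 %| D)%Z).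
Proof.
move=> hN D hD.
rewrite /z2_cong /b_coef add1n.
set D1 := (iter_approx f k n'.+1).[x n'.+1] - x n'.+1.
have h1 : (pow2 n'.+1 %| D1 - D)%Z.
  have -> : D1 - D = ((iter_approx f k n'.+1).[x n'.+1] - (iter_approx f k N).[x N])
                      - (x n'.+1 - x N) by rewrite /D1 /D; ring.
  apply: rpredB; first apply: pc_eval; first exact: iter_pc.
    rewrite -opprB rpredN; exact: coh_dvd.
  rewrite -opprB rpredN; exact: coh_dvd.
have h2 : (pow2 n' %| D1)%Z.
  have -> : D1 = (D1 - D) + D by ring.
  rewrite rpredD //; apply: dvdz_trans h1; exact: pow2_dvd.
have E1 : (pow2 n'.+1 %| D)%Z = (pow2 n'.+1 %| D1)%Z.
  have -> : D = D1 - (D1 - D) by ring.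
  by rewrite (rpredBr _ h1).
rewrite E1 pow2_1.
set q := (D1 %/ pow2 n')%Z.
have hq : D1 = q * pow2 n' by rewrite divzK.
have -> : (pow2 n'.+1 %| D1)%Z = (2 %| q)%Z by rewrite hq pow2S (dvdz_mul2r (pow2_neq0 n')).
exact: par2.
Qed.



Definition cyc (h : int -> int) (s : seq int) :=
  forall i, (i < size s)%N -> h (nth 0 s i) = nth 0 s (i.+1 %% size s).

Lemma cyc_iter h s j i : cyc h s -> (i < size s)%N ->
  iter j h (nth 0 s i) = nth 0 s ((i + j) %% size s).
Proof.
move=> hc hi; elim: j => [|j IH] /=; first by rewrite addn0 modn_small.
rewrite IH hc; last by rewrite ltn_mod; case: (size s) hi.
by rewrite addnS -addn1 modnDml addn1.
Qed.

Lemma cyc_iter_in h s j x : cyc h s -> x \in s -> iter j h x \in s.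
Proof.
move=> hc; move/(nthP 0) => [i hi <-].
rewrite cyc_iter // mem_nth // ltn_mod; by case: (size s) hi.
Qed.

Lemma cyc_reach h s x w : cyc h s -> x \in s -> w \in s -> exists j, w = iter j h x.
Proof.
move=> hc /(nthP 0) [i hi <-] /(nthP 0) [j hj <-].
exists (j + (size s - i))%N; rewrite cyc_iter //.
congr nth.
rewrite addnA addnC addnA subnK; last exact: ltnW.
by rewrite modnDl modn_small.
Qed.

Lemma cyc_eqi h s s' z : cyc h s -> cyc h s' -> z \in s -> z \in s' -> s =i s'.
Proof.
move=> hc hc' zs zs' w; apply/idP/idP => hw.
  by have [j ->] := cyc_reach hc zs hw; apply: cyc_iter_in.
by have [j ->] := cyc_reach hc' zs' hw; apply: cyc_iter_in.
Qed.

Lemma is_cycle_cyc f m s : is_cycle f m s -> cyc (fn f m) s.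
Proof. by case. Qed.

Lemma mk_cyc h y k : (0 < k)%N -> iter k h y = y -> cyc h (mkseq (fun i => iter i h y) k).
Proof.
move=> hk hy i; rewrite size_mkseq => hi.
rewrite nth_mkseq //.
have : (i.+1 <= k)%N by [].
rewrite leq_eqVlt => /orP [/eqP e|lt].
  by rewrite e modnn nth_mkseq // -iterS e hy.
by rewrite modn_small // nth_mkseq.
Qed.


Lemma three (D a b c p q : int) : 0 < D -> 0 <= a < 2 * D -> 0 <= b < 2 * D -> 0 <= c < 2 * D ->
  a - c = p * D -> b - c = q * D -> a != b -> c = a \/ c = b.
Proof.
move=> hD ha hb hc hp hq hab.
have hp1 : -2 < p < 2.
  apply/andP; split.
    rewrite ltNge; apply/negP => h.
    have : p * D <= -2 * D by rewrite ler_pM2r.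
    lia.
  rewrite ltNge; apply/negP => h.
  have : 2 * D <= p * D by rewrite ler_pM2r.
  lia.
have hq1 : -2 < q < 2.
  apply/andP; split.
    rewrite ltNge; apply/negP => h.
    have : q * D <= -2 * D by rewrite ler_pM2r.
    lia.
  rewrite ltNge; apply/negP => h.
  have : 2 * D <= q * D by rewrite ler_pM2r.
  lia.
have : p = -1 \/ p = 0 \/ p = 1 by lia.
have : q = -1 \/ q = 0 \/ q = 1 by lia.
move=> [Eq|[Eq|Eq]] [Ep|[Ep|Ep]]; subst p q; lia.
Qed.
Lemma mod2k (i k : nat) : (i < 2 * k)%N -> (i %% k = if (i < k)%N then i else i - k)%N.
Proof.
move=> h; case: ltnP => h2; first by rewrite modn_small.
have -> : i = ((i - k) + k)%N by rewrite subnK.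
rewrite modnDr modn_small; first by rewrite addnK.
lia.
Qed.
Lemma modk (i j k : nat) : (i < 2 * k)%N -> (j < 2 * k)%N -> (i %% k = j %% k)%N -> i <> j ->
  (j = i + k)%N \/ (i = j + k)%N.
Proof. move=> hi hj. rewrite (mod2k hi) (mod2k hj). case: ifP; case: ifP; lia. Qed.

Definition cst (w : int) : Z2 := @MkZ2 (fun _ => w) (fun _ => erefl).

Lemma cyc_period h s x : cyc h s -> x \in s -> iter (size s) h x = x.
Proof.
move=> hc /(nthP 0) [i hi <-]; rewrite cyc_iter //.
by rewrite modnDr modn_small.
Qed.

Lemma in_range d z : 0 < d -> 0 <= (z %% d)%Z < d.
Proof. by move=> hd; rewrite modz_ge0 ?gt_eqF // ltz_pmod. Qed.

Lemma dv_mod d d' z : (d' %| d)%Z -> ((z %% d)%Z %% d')%Z = (z %% d')%Z.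
Proof. by move=> h; apply: modE; apply: dvdz_trans h (mod_dvd _ _). Qed.

Lemma dv4 (D X : int) : D != 0 -> (4 * D %| 2 * D * X)%Z = (2 %| X)%Z.
Proof.
move=> hD.
have -> : 4 * D = (2 * D) * 2 by ring.
by rewrite dvdz_mul2l // mulf_neq0.
Qed.

Section Main.
Variables (f : Z2poly) (n : nat) (sigma : seq int).
Hypotheses (hn : (2 <= n)%N) (hcyc : is_cycle f n sigma) (hws : weakly_splits f n sigma).

Let N := n.+3.
Let k := size sigma.
Let P := approx f N.
Let Qi i := iter_approx f i N.
Let Q := Qi k.
Let A w := Ak f k N w.
Let D := pow2 n.
Let good w := (w %% D)%Z \in sigma.
Let E w := (pow2 n.+2 %| Q.[w] - w)%Z.

Lemma k_gt0 : (0 < k)%N. Proof. by case: hcyc. Qed.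
Lemma hD : 0 < D. Proof. exact: pow2_gt0. Qed.
Lemma hDn : D != 0. Proof. exact: pow2_neq0. Qed.
Lemma hnN : (n <= N)%N. Proof. by rewrite /N; lia. Qed.
Lemma hN1 : (n.+1 <= N)%N. Proof. by rewrite /N; lia. Qed.
Lemma hN2 : (n.+2 <= N)%N. Proof. by rewrite /N; lia. Qed.
Lemma hN3 : (n.+3 <= N)%N. Proof. by rewrite /N; lia. Qed.
Lemma h2N : (2 <= N)%N. Proof. by rewrite /N; lia. Qed.

Lemma good_cong w w' : (D %| w - w')%Z -> good w = good w'.
Proof. by move=> h; rewrite /good (modE h). Qed.

Lemma G1 w : good w -> (D %| Q.[w] - w)%Z.
Proof.
move=> hw; rewrite -eqz_mod_dvd; apply/eqP.
rewrite -(fn_iter _ _ _ hnN) /k cyc_period //; exact: is_cycle_cyc.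
Qed.

Lemma G2 w : good w -> (pow2 2 %| A w - 3)%Z /\ (pow2 n.+1 %| Q.[w] - w)%Z.
Proof.
move=> hw; have [ha hb] := hws (x := cst w) hw.
split; first by move/(@T1 f k N (cst w) 3 h2N): ha.
have [h1 _] := @T2 f k N n (cst w) hN1 (G1 hw).
by apply/h1.
Qed.

Lemma goodP w : good w -> good P.[w].
Proof.
move=> hw.
have e : (P.[w] %% D)%Z = fn f n (w %% D)%Z.
  rewrite (fn_mod _ _ hnN); apply: modE; apply: pc_eval; first exact: pc_refl.
  by rewrite -opprB rpredN mod_dvd.
rewrite /good e; exact: (cyc_iter_in 1 (is_cycle_cyc hcyc) hw).
Qed.

Lemma p4 : pow2 n.+2 = 4 * D. Proof. by rewrite !pow2S /D; ring. Qed.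
Lemma p8 : pow2 n.+3 = 8 * D. Proof. by rewrite !pow2S /D; ring. Qed.
Lemma p2 : pow2 n.+1 = 2 * D. Proof. by rewrite !pow2S /D; ring. Qed.
Lemma eD : D = 4 * pow2 (n - 2).
Proof. by rewrite /D /pow2 -[in LHS](subnK hn) exprD mulrC. Qed.

Lemma E_form z X : Q.[z] - z = 2 * D * X -> E z = (2 %| X)%Z.
Proof. by move=> h; rewrite /E h p4 dv4 // hDn. Qed.

Lemma G2' w : good w -> exists u B, A w = 3 + u * 4 /\ Q.[w] = w + B * (2 * D).
Proof.
move=> hw; have [/dvdzP [u hu] /dvdzP [B hB]] := G2 hw.
exists u, B; split; first by rewrite -[4]/(pow2 2) -hu; ring.
by rewrite -p2 -hB; ring.
Qed.

Lemma E_shift w s : good w -> E (w + 2 * D * s) = E w.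
Proof.
move=> hw; have [u [B [eA eQ]]] := G2' hw.
have [c hc] := taylor2 Q w (2 * D * s).
rewrite (@E_form (w + 2 * D * s) (B + s * (2 + 4 * u) + 2 * D * s ^+ 2 * c)); last first.
  rewrite hc eQ; move: eA; rewrite /A /Ak => ->; rewrite /Q /Qi; ring.
rewrite (@E_form w B); last by rewrite eQ; ring.
apply/idP/idP; lia.
Qed.

Lemma E_flip w : good w -> E (w + D) = ~~ E w.
Proof.
move=> hw; have [u [B [eA eQ]]] := G2' hw.
have [c hc] := taylor2 Q w D.
rewrite (@E_form (w + D) (B + 1 + 2 * u + 2 * pow2 (n - 2) * c)); last first.
  rewrite hc eQ; move: eA; rewrite /A /Ak => ->; rewrite /Q /Qi.
  have e2 : D ^+ 2 = D * (4 * pow2 (n - 2)) by rewrite expr2 {2}eD.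
  rewrite e2; ring.
rewrite (@E_form w B); last by rewrite eQ; ring.
apply/idP/idP; lia.
Qed.

Lemma QP w : Q.[P.[w]] = P.[Q.[w]].
Proof.
have e : iter_approx f (k + 1) N = iter_approx f (1 + k) N by rewrite addnC.
move: e; rewrite !Q_add Q1 => e.
have := congr1 (fun p => p.[w]) e; rewrite /= !horner_comp.
by rewrite /Q /Qi /P.
Qed.

Lemma Pder_odd w : good w -> ~~ (2 %| P^`().[w])%Z.
Proof.
move=> hw; have [u [B [eA eQ]]] := G2' hw.
pose m := k.-1.
have hk : k = (m + 1)%N by rewrite addn1 prednK // k_gt0.
have e : A w = (Qi m)^`().[P.[w]] * P^`().[w].
  by rewrite /A /Ak hk Q_add Q1 deriv_comp hornerM horner_comp.
apply/negP => h2.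
have : (2 %| (Qi m)^`().[P.[w]] * P^`().[w])%Z by apply: dvdz_mull.
rewrite -e eA; lia.
Qed.

Lemma E_P w : good w -> E (P.[w]) = E w.
Proof.
move=> hw; have [u [B [eA eQ]]] := G2' hw; have ho := Pder_odd hw.
have ev : P^`().[w] = 2 * (P^`().[w] %/ 2)%Z + 1 by lia.
set v := (P^`().[w] %/ 2)%Z in ev.
have [c hc] := taylor2 P w (B * (2 * D)).
rewrite (@E_form (P.[w]) (B * (2 * v + 1) + 2 * D * B ^+ 2 * c)); last first.
  by rewrite QP eQ hc ev; ring.
rewrite (@E_form w B); last by rewrite eQ; ring.
apply/idP/idP; lia.
Qed.

Lemma G3 w : good w -> (pow2 n.+3 %| (Qi (k + k)).[w] - w)%Z.
Proof.
move=> hw; have [u [B [eA eQ]]] := G2' hw.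
rewrite /Qi Q_add horner_comp -/(Qi k) -/Q eQ.
have [c hc] := taylor2 Q w (B * (2 * D)).
rewrite hc eQ; move: eA; rewrite /A /Ak => ->.
rewrite p8; apply/dvdzP; exists (B * (1 + u) + 2 * pow2 (n - 2) * B ^+ 2 * c).
rewrite eD; ring.
Qed.

Lemma A2 w : good w -> (pow2 2 %| Ak f (k + k) N w - 1)%Z.
Proof.
move=> hw.
have gQ : good Q.[w] by rewrite (good_cong (G1 hw)).
have [u [B [eA eQ]]] := G2' hw; have [u' [B' [eA' _]]] := G2' gQ.
rewrite /Ak Q_add deriv_comp hornerM horner_comp.
move: eA eA'; rewrite /A /Ak /Q /Qi => -> ->.
apply/dvdzP; exists (2 + 3 * u + 3 * u' + 4 * u * u'); rewrite /pow2; ring.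
Qed.

Let M1 := pow2 n.+1.
Let M2 := pow2 n.+2.
Let x1 := nth 0 sigma 0.
Let h := fn f n.
Let h1 := fn f n.+1.
Let h2 := fn f n.+2.
Let tau y := mkseq (fun i => iter i h1 y) k.

Lemma hM1 : 0 < M1. Proof. exact: pow2_gt0. Qed.
Lemma hM2 : 0 < M2. Proof. exact: pow2_gt0. Qed.
Lemma DM1 : (D %| M1)%Z. Proof. exact: pow2_dvd. Qed.
Lemma M1M2 : (M1 %| M2)%Z. Proof. exact: pow2_dvd. Qed.

Lemma x1_in : x1 \in sigma. Proof. by rewrite mem_nth // k_gt0. Qed.

Lemma x1_range : 0 <= x1 < D.
Proof. by case: hcyc => _ _ /allP /(_ _ x1_in) /andP [-> ->]. Qed.

Lemma sigma_nth i : (i < k)%N -> nth 0 sigma i = iter i h x1.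
Proof.
move=> hi; rewrite /x1 cyc_iter ?k_gt0 //; last exact: is_cycle_cyc.
by rewrite add0n modn_small.
Qed.

Lemma sigma_mk : sigma = mkseq (fun i => iter i h x1) k.
Proof.
apply: (@eq_from_nth _ 0); first by rewrite size_mkseq.
by move=> i hi; rewrite nth_mkseq // sigma_nth.
Qed.

Lemma iter_h1 y i : 0 <= y < M1 -> iter i h1 y = ((Qi i).[y] %% M1)%Z.
Proof. by move=> hy; rewrite -(fn_iter _ _ _ hN1) modz_small. Qed.

Lemma iter_h2 y i : 0 <= y < M2 -> iter i h2 y = ((Qi i).[y] %% M2)%Z.
Proof. by move=> hy; rewrite -(fn_iter _ _ _ hN2) modz_small. Qed.

Lemma iter_h y i : iter i h (y %% D)%Z = ((Qi i).[y] %% D)%Z.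
Proof. exact: fn_iter _ _ _ hnN. Qed.

Definition base y := (0 <= y < M1) && ((y %% D)%Z == x1).

Lemma base_good y : base y -> good y.
Proof. by case/andP => _ /eqP e; rewrite /good e x1_in. Qed.

Lemma T_map y : base y -> map (fun z => (z %% D)%Z) (tau y) = sigma.
Proof.
case/andP => hy /eqP hx.
rewrite /tau /mkseq -map_comp sigma_mk /mkseq; apply: eq_map => i /=.
by rewrite iter_h1 // dv_mod ?DM1 // -iter_h hx.
Qed.

Lemma E_iter y i : good y -> good (Qi i).[y] /\ E (Qi i).[y] = E y.
Proof.
move=> hy; elim: i => [|i [g1 e1]] /=; first by rewrite hornerX.
rewrite horner_comp; split; first exact: goodP.
by rewrite E_P.
Qed.

Lemma E_mod z : good z -> good (z %% M1)%Z /\ E (z %% M1)%Z = E z.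
Proof.
move=> hz.
have g : good (z %% M1)%Z.
  by rewrite (good_cong (dvdz_trans DM1 (mod_dvd _ _))).
split => //.
have {2}-> : z = (z %% M1)%Z + 2 * D * (z %/ M1)%Z.
  by rewrite -p2 {1}(divz_eq z M1); ring.
by rewrite E_shift.
Qed.

Lemma base_iter y i : base y -> iter i h1 y = ((Qi i).[y] %% M1)%Z.
Proof. by case/andP => hy _; rewrite iter_h1. Qed.

Lemma T_close y : base y -> iter k h1 y = y.
Proof.
move=> hb; rewrite base_iter //; have /andP [hy _] := hb.
have [_ hQ] := G2 (base_good hb).
rewrite -[RHS](modz_small hy); exact: modE.
Qed.

Lemma T_cyc y : base y -> is_cycle f n.+1 (tau y).
Proof.
move=> hb; split.
- by rewrite size_mkseq k_gt0.
- apply: (map_uniq (f := fun z => (z %% D)%Z)); rewrite T_map //; by case: hcyc.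
- apply/allP => z /(nthP 0) [i]; rewrite size_mkseq => hi <-.
  by rewrite nth_mkseq // base_iter // in_range // hM1.
- exact: mk_cyc k_gt0 (T_close hb).
Qed.

Lemma T_lift y : base y -> is_lift f n sigma (tau y).
Proof.
move=> hb; split; first exact: T_cyc.
apply/allP => z hz; rewrite -(T_map hb); exact: map_f.
Qed.

Lemma y_in y : y \in tau y.
Proof.
apply/(nthP 0); exists 0%N; first by rewrite size_mkseq k_gt0.
by rewrite nth_mkseq // k_gt0.
Qed.

Lemma T_E y z : base y -> (z %% M1)%Z \in tau y -> good z /\ E z = E y.
Proof.
move=> hb hz.
have gz : good z.
  rewrite /good -(dv_mod z DM1) -(T_map hb); exact: map_f.
split => //; have [g' e'] := E_mod gz; rewrite -e'.
move: hz => /(nthP 0) [i]; rewrite size_mkseq => hi.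
rewrite nth_mkseq // base_iter // => <-.
have [gi ei] := E_iter i (base_good hb).
by have [_ ->] := E_mod gi.
Qed.

Lemma choose_y : exists y1 y2, [/\ base y1, base y2, E y1 & ~~ E y2].
Proof.
have [r0 r1] := andP x1_range.
have b0 : base x1.
  rewrite /base r0 modz_small ?r0 ?r1 // eqxx andbT /=.
  by rewrite (lt_le_trans r1) // /M1 p2; have := hD; lia.
have b1 : base (x1 + D).
  rewrite /base; apply/andP; split; [apply/andP; split|].
  - by have := hD; lia.
  - by rewrite /M1 p2; lia.
  - have e : ((x1 + D) %% D)%Z = x1.
      by rewrite modzDr modz_small // r0 r1.
    by rewrite e eqxx.
have ef := E_flip (base_good b0).
case e0 : (E x1).
  by exists x1, (x1 + D); rewrite ef e0.
by exists (x1 + D), x1; rewrite ef e0.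
Qed.

Lemma eqmod_ex d a b : (a %% d)%Z = (b %% d)%Z -> exists p, a - b = p * d.
Proof. by move/eqP; rewrite eqz_mod_dvd => /dvdzP. Qed.

Lemma T_mem y z : base y -> z \in tau y -> [/\ E z = E y, 0 <= z < M1 & good z].
Proof.
move=> hb /(nthP 0) [i]; rewrite size_mkseq => hi.
rewrite nth_mkseq // base_iter // => hz.
have hz' : (z %% M1)%Z = z by rewrite -hz modz_mod.
have hin : (z %% M1)%Z \in tau y.
  rewrite hz'; apply/(nthP 0); exists i; rewrite ?size_mkseq // nth_mkseq // base_iter //.
have [g e] := T_E hb hin.
by split => //; rewrite -hz in_range // hM1.
Qed.

Lemma tau_unique y1 y2 : base y1 -> base y2 -> E y1 -> ~~ E y2 ->
  forall t, is_lift f n sigma t -> t =i tau y1 \/ t =i tau y2.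
Proof.
move=> b1 b2 e1 e2 t [ct /allP at'].
have t0 : (0 < size t)%N by case: ct.
set z := nth 0 t 0.
have zt : z \in t by apply: mem_nth.
have zr : 0 <= z < M1 by case: ct => _ _ /allP /(_ _ zt).
have /(nthP 0) [j hj ej] := at' z zt.
have mem1 : iter j h1 y1 \in tau y1 by apply: cyc_iter_in (y_in y1); exact: is_cycle_cyc (T_cyc b1).
have mem2 : iter j h1 y2 \in tau y2 by apply: cyc_iter_in (y_in y2); exact: is_cycle_cyc (T_cyc b2).
have md y : base y -> (iter j h1 y %% D)%Z = (z %% D)%Z.
  move=> hb; rewrite -ej -(T_map hb) (nth_map 0) ?size_mkseq // nth_mkseq //.
have [E1 r1 _] := T_mem b1 mem1.
have [E2 r2 _] := T_mem b2 mem2.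
have ne : iter j h1 y1 != iter j h1 y2.
  apply/eqP => eq; have : E y1 = E y2 by rewrite -E1 -E2 eq.
  by rewrite e1 (negbTE e2).
have [p hp] := eqmod_ex (md _ b1).
have [q hq] := eqmod_ex (md _ b2).
have M1e : M1 = 2 * D by rewrite /M1 p2.
rewrite M1e in r1 r2 zr.
case: (three hD r1 r2 zr hp hq ne) => hz.
  left; apply: cyc_eqi (is_cycle_cyc ct) (is_cycle_cyc (T_cyc b1)) zt _; by rewrite hz.
right; apply: cyc_eqi (is_cycle_cyc ct) (is_cycle_cyc (T_cyc b2)) zt _; by rewrite hz.
Qed.

Lemma xN_in y (x : Z2) : base y -> (x n.+1 %% pow2 n.+1)%Z \in tau y ->
  good (x N) /\ E (x N) = E y.
Proof.
move=> hb hx; apply: T_E hb _.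
have -> : (x N %% M1)%Z = (x n.+1 %% M1)%Z by apply: modE; exact: coh_dvd hN1.
exact: hx.
Qed.

Lemma tau_ws y1 : base y1 -> E y1 -> weakly_splits f n.+1 (tau y1).
Proof.
move=> b1 e1 x hx; rewrite size_mkseq.
have [g eE] := xN_in b1 hx.
split; first by apply/(@T1 f k N x 3 h2N); exact: (G2 g).1.
have [h1' _] := @T2 f k N n.+1 x hN2 (G2 g).2.
have hE : E (x N) by rewrite eE.
by apply/h1'; exact: hE.
Qed.

Lemma tau_wg y2 : base y2 -> ~~ E y2 -> weakly_grows f n.+1 (tau y2).
Proof.
move=> b2 e2 x hx; rewrite size_mkseq.
have [g eE] := xN_in b2 hx.
split; first by apply/(@T1 f k N x 3 h2N); exact: (G2 g).1.
have [_ h2'] := @T2 f k N n.+1 x hN2 (G2 g).2.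
have hE : ~~ E (x N) by rewrite eE.
by apply/h2'; exact: hE.
Qed.

Lemma tau_ne y1 y2 : base y1 -> base y2 -> E y1 -> ~~ E y2 -> ~ (tau y1 =i tau y2).
Proof.
move=> b1 b2 e1 e2 eq.
have := y_in y1; rewrite eq => /(T_mem b2) [E1 _ _].
by move: e2; rewrite -E1 e1.
Qed.

Let rho y := mkseq (fun i => iter i h2 y) (k + k).

Lemma kk_gt0 : (0 < k + k)%N. Proof. by have := k_gt0; lia. Qed.

Lemma M1le y : base y -> 0 <= y < M2.
Proof.
case/andP => /andP [r0 r1] _; rewrite r0 /=.
by rewrite (lt_le_trans r1) // /M1 /M2 !pow2S; have := pow2_gt0 n; lia.
Qed.

Lemma R_iter y i : base y -> iter i h2 y = ((Qi i).[y] %% M2)%Z.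
Proof. by move=> hb; rewrite iter_h2 // M1le. Qed.

Lemma R_red y i : base y -> ((iter i h2 y) %% M1)%Z = iter i h1 y.
Proof. by move=> hb; rewrite R_iter // dv_mod ?M1M2 // base_iter. Qed.

Lemma R_close y : base y -> iter (k + k) h2 y = y.
Proof.
move=> hb; rewrite R_iter // -[RHS](modz_small (M1le hb)).
apply: modE; apply: dvdz_trans (G3 (base_good hb)).
exact: pow2_dvd.
Qed.

Lemma NE y i : base y -> ~~ E y -> iter (k + i) h2 y != iter i h2 y.
Proof.
move=> hb he; rewrite !R_iter //; apply/negP => /eqP eq.
have [gw ew] := E_iter i (base_good hb).
move: eq; rewrite /Qi Q_add horner_comp -/(Qi i) -/(Qi k) -/Q => eq.
have : E (Qi i).[y].
  by rewrite /E -eqz_mod_dvd; apply/eqP.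
by rewrite ew (negbTE he).
Qed.

Lemma tau_nth y i : base y -> iter i h1 y = nth 0 (tau y) (i %% k).
Proof.
move=> hb; have c := is_cycle_cyc (T_cyc hb).
have h0 : (0 < size (tau y))%N by rewrite size_mkseq k_gt0.
have := @cyc_iter h1 (tau y) i 0 c h0.
by rewrite size_mkseq add0n nth_mkseq ?k_gt0.
Qed.

Lemma R_uniq y : base y -> ~~ E y -> uniq (rho y).
Proof.
move=> hb he; apply/(uniqP 0) => i j; rewrite !inE size_mkseq => hi hj.
rewrite !nth_mkseq // => eq.
have e1 : iter i h1 y = iter j h1 y by rewrite -!R_red // eq.
have ek : (i %% k = j %% k)%N.
  move: e1; rewrite !tau_nth // => e1.
  have := T_cyc hb; case => _ /(uniqP 0) U _ _.
  apply: U => //; rewrite inE size_mkseq ltn_mod k_gt0 //.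
case: (eqVneq i j) => // nij.
have hi' : (i < 2 * k)%N by rewrite mul2n -addnn.
have hj' : (j < 2 * k)%N by rewrite mul2n -addnn.
case: (modk hi' hj' ek (elimN eqP nij)) => ej.
  by move: eq; rewrite ej addnC => /esym/eqP; rewrite (negbTE (NE i hb he)).
by move: eq; rewrite ej addnC => /eqP; rewrite (negbTE (NE j hb he)).
Qed.

Lemma rho_cyc y : base y -> ~~ E y -> is_cycle f n.+2 (rho y).
Proof.
move=> hb he; split.
- by rewrite size_mkseq kk_gt0.
- exact: R_uniq.
- apply/allP => z /(nthP 0) [i]; rewrite size_mkseq => hi <-.
  by rewrite nth_mkseq // R_iter // in_range // hM2.
- exact: mk_cyc kk_gt0 (R_close hb).
Qed.

Lemma rho_lift y : base y -> ~~ E y -> is_lift f n.+1 (tau y) (rho y).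
Proof.
move=> hb he; split; first exact: rho_cyc.
apply/allP => z /(nthP 0) [i]; rewrite size_mkseq => hi <-.
rewrite nth_mkseq // -/M1 R_red //.
by apply: cyc_iter_in (y_in y); exact: is_cycle_cyc (T_cyc hb).
Qed.

Lemma rho_unique y : base y -> ~~ E y ->
  forall r, is_lift f n.+1 (tau y) r -> r =i rho y.
Proof.
move=> hb he r [cr /allP ar].
have r0 : (0 < size r)%N by case: cr.
set z := nth 0 r 0.
have zr : z \in r by apply: mem_nth.
have zrg : 0 <= z < M2 by case: cr => _ _ /allP /(_ _ zr).
have /(nthP 0) [j hj ej] := ar z zr.
rewrite size_mkseq in hj; rewrite nth_mkseq // in ej.
have u1in : iter j h2 y \in rho y.
  by apply/(nthP 0); exists j; rewrite ?size_mkseq ?nth_mkseq //; lia.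
have u2in : iter (k + j) h2 y \in rho y.
  by apply/(nthP 0); exists (k + j)%N; rewrite ?size_mkseq ?nth_mkseq //; lia.
have m1 : (iter j h2 y %% M1)%Z = (z %% M1)%Z by rewrite R_red.
have m2 : (iter (k + j) h2 y %% M1)%Z = (z %% M1)%Z.
  rewrite R_red // iterD.
  have jin : iter j h1 y \in tau y.
    by apply: cyc_iter_in (y_in y); exact: is_cycle_cyc (T_cyc hb).
  have := cyc_period (is_cycle_cyc (T_cyc hb)) jin.
  by rewrite size_mkseq => ->; rewrite ej.
have [p hp] := eqmod_ex m1.
have [q hq] := eqmod_ex m2.
have M2e : M2 = 2 * M1 by rewrite /M2 /M1 pow2S.
have ra : 0 <= iter j h2 y < 2 * M1 by rewrite -M2e R_iter // in_range // hM2.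
have rb : 0 <= iter (k + j) h2 y < 2 * M1 by rewrite -M2e R_iter // in_range // hM2.
rewrite M2e in zrg.
have ne : iter j h2 y != iter (k + j) h2 y by rewrite eq_sym NE.
case: (three hM1 ra rb zrg hp hq ne) => hz.
  apply: cyc_eqi (is_cycle_cyc cr) (is_cycle_cyc (rho_cyc hb he)) zr _; by rewrite hz.
apply: cyc_eqi (is_cycle_cyc cr) (is_cycle_cyc (rho_cyc hb he)) zr _; by rewrite hz.
Qed.

Lemma rho_ss y : base y -> ~~ E y -> strongly_splits f n.+2 (rho y).
Proof.
move=> hb he x hx; rewrite size_mkseq.
have gx : good (x N).
  have e : (x N %% M2)%Z = (x n.+2 %% M2)%Z by apply: modE; exact: coh_dvd hN2.
  have : ((x N %% M2)%Z %% M1)%Z \in tau y.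
    by move/allP: (rho_lift hb he).2 => /(_ _ hx); rewrite -e.
  by rewrite dv_mod ?M1M2 // => /(T_E hb) [g _].
split; first by apply/(@T1 f (k + k) N x 1 h2N); exact: A2.
have hd : (pow2 n.+2 %| (iter_approx f (k + k) N).[x N] - x N)%Z.
  apply: dvdz_trans (G3 gx); exact: pow2_dvd.
have [h1' _] := @T2 f (k + k) N n.+2 x hN3 hd.
by apply/h1'; exact: G3 gx.
Qed.

Lemma main_thm :
  exists tau1 tau2 : seq int,
    [/\ is_lift f n sigma tau1, is_lift f n sigma tau2, ~ (tau1 =i tau2)
      & (forall tau, is_lift f n sigma tau -> tau =i tau1 \/ tau =i tau2)] /\
    [/\ weakly_splits f n.+1 tau1, weakly_grows f n.+1 tau2 &
        exists rho : seq int,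
          [/\ is_lift f n.+1 tau2 rho,
              (forall rho', is_lift f n.+1 tau2 rho' -> rho' =i rho) &
              strongly_splits f n.+2 rho]].
Proof.
have [y1 [y2 [b1 b2 e1 e2]]] := choose_y.
exists (tau y1), (tau y2); split; split.
- exact: T_lift b1.
- exact: T_lift b2.
- exact: tau_ne.
- exact: tau_unique.
- exact: tau_ws.
- exact: tau_wg.
- exists (rho y2); split; [exact: rho_lift | exact: rho_unique | exact: rho_ss].
Qed.

End Main.

Unset Implicit Arguments.

Theorem proposition3p3 (f : Z2poly) (n : nat) (sigma : seq int) :
  (2 <= n)%N -> is_cycle f n sigma -> weakly_splits f n sigma ->
  exists tau1 tau2 : seq int,
    [/\ is_lift f n sigma tau1, is_lift f n sigma tau2, ~ (tau1 =i tau2)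
      & (forall tau, is_lift f n sigma tau -> tau =i tau1 \/ tau =i tau2)] /\
    [/\ weakly_splits f n.+1 tau1, weakly_grows f n.+1 tau2 &
        exists rho : seq int,
          [/\ is_lift f n.+1 tau2 rho,
              (forall rho', is_lift f n.+1 tau2 rho' -> rho' =i rho) &
              strongly_splits f n.+2 rho]].
Proof.
move=> hn hc hw; exact: main_thm.
Qed.
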